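(* Every $M_1\in GL_n(\mathbb{C}(\{z-1\}))$ can be written $M_1=C^{(1)}R^{(1)}$ where $R^{(1)}\in GL_n(\mathbb{C}(\{z-1\}))$ is regular at $1$ and $C^{(1)}\in GL_n(\mathbb{C}(z))$ is regular at $0$ and $\infty$ and of the form $C^{(1)}=u^{-k}T_{i_1,\underline{l_1}}D_{i_1,u}\cdots T_{i_r,\underline{l_r}}D_{i_r,u}$ with $k\in\mathbb{N}$, $r\in\mathbb{N}$, $i_1,\dots,i_r\in\{1,\dots,n\}$, $\underline{l_1},\dots,\underline{l_r}\in\mathbb{C}^n\setminus\{0\}$ and $u=\frac{z-1}{z+1}$.
   Context: $\mathbb{C}(\{z-1\})$ is the field of convergent Laurent series at $1$. A matrix is regular at $x\in\mathbb{C}$ if its entries are analytic at $x$ and its value at $x$ is invertible; regular at $\infty$ if $A(1/z)$ is regular at $0$. $D_{i,u}$ denotes the $n\times n$ identity matrix whose $(i,i)$ entry is replaced by $u$; for $\underline{l}=(l_1,\dots,l_n)$, $T_{i,\underline{l}}$ denotes the $n\times n$ identity matrix whose $i$-th row is replaced by $\underline{l}$. *)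

(* Defs.v *)
From HB Require Import structures.
From mathcomp Require Import all_boot all_order all_algebra.
From mathcomp Require Import complex.
From mathcomp Require Import reals.
Set Implicit Arguments. Unset Strict Implicit. Unset Printing Implicit Defensive.
Import Order.TTheory GRing.Theory Num.Theory.
Local Open Scope ring_scope.
Local Open Scope complex_scope.

Section Defs.
Variable R : realType.
Local Notation C := R[i].
Variable n : nat.

Definition ps_conv (a : nat -> C) (w s : C) : Prop :=
  forall e : R, 0 < e -> exists N : nat, forall m : nat, (N <= m)%N ->
    `|\sum_(k < m) a k * w ^+ k - s| < e%:C.

Definition analytic_at (x : C) (f : C -> C) : Prop :=
  exists (r : R) (a : nat -> C), 0 < r /\
    forall z : C, `|z - x| < r%:C -> ps_conv a (z - x) (f z).

(* f represents an element of C({z-x}), the field of convergent Laurent series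
   at x (i.e. a meromorphic germ at x): on a punctured disc around x,
   (z-x)^m f(z) is given by a convergent power series. *)
Definition laurent_at (x : C) (f : C -> C) : Prop :=
  exists (m : nat) (r : R) (a : nat -> C), 0 < r /\
    forall z : C, 0 < `|z - x| < r%:C -> ps_conv a (z - x) ((z - x) ^+ m * f z).

(* Equality of germs at x: equality on some punctured disc around x
   (this is equality in C({z-x})). *)
Definition germ_eq (x : C) (A B : C -> 'M[C]_n) : Prop :=
  exists r : R, 0 < r /\ forall z : C, 0 < `|z - x| < r%:C -> A z = B z.

Definition GL_laurent (x : C) (A : C -> 'M[C]_n) : Prop :=
  (forall i j, laurent_at x (fun z => A z i j)) /\
  exists B : C -> 'M[C]_n, (forall i j, laurent_at x (fun z => B z i j)) /\
    germ_eq x (fun z => A z *m B z) (fun _ => 1%:M).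

Definition regular_at (x : C) (A : C -> 'M[C]_n) : Prop :=
  exists B : C -> 'M[C]_n, germ_eq x A B /\
    (forall i j, analytic_at x (fun z => B z i j)) /\ B x \in unitmx.

Definition regular_at_infty (A : C -> 'M[C]_n) : Prop :=
  regular_at 0 (fun z => A z^-1).

Definition is_ratfun (f : C -> C) : Prop :=
  exists p q : {poly C}, q != 0 /\ forall z : C, q.[z] != 0 -> f z = p.[z] / q.[z].

Definition GL_rat (A : C -> 'M[C]_n) : Prop :=
  (forall i j, is_ratfun (fun z => A z i j)) /\
  exists B : C -> 'M[C]_n, (forall i j, is_ratfun (fun z => B z i j)) /\
    exists s : seq C, forall z, z \notin s -> A z *m B z = 1%:M.

Definition u (z : C) : C := (z - 1) / (z + 1).

Definition Dmx (i : 'I_n) (a : C) : 'M[C]_n :=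
  \matrix_(p, q) (if p == q then (if p == i then a else 1) else 0).

Definition Tmx (i : 'I_n) (l : 'rV[C]_n) : 'M[C]_n :=
  \matrix_(p, q) (if p == i then l 0 q else (p == q)%:R).

(* C(z) = u^{-k} T_{i_1,l_1} D_{i_1,u} ... T_{i_r,l_r} D_{i_r,u},
   with s = [:: (i_1,l_1); ...; (i_r,l_r)] *)
Definition Cmat (k : nat) (s : seq ('I_n * 'rV[C]_n)) (z : C) : 'M[C]_n :=
  (u z) ^- k *: foldr (fun p acc => Tmx p.1 p.2 *m Dmx p.1 (u z) *m acc) 1%:M s.

End Defs.

(* Main.v *)
Require Import Defs.
From HB Require Import structures.
From mathcomp Require Import all_boot all_order all_algebra.
From mathcomp Require Import complex.
From mathcomp Require Import reals.
From mathcomp Require Import ring lra.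
Set Implicit Arguments. Unset Strict Implicit. Unset Printing Implicit Defensive.
Import Order.TTheory GRing.Theory Num.Theory.
Local Open Scope ring_scope.
Local Open Scope complex_scope.

Section Norms.
Variable R : realType.
Local Notation C := R[i].

Definition nc (z : C) : R := complex.Re `|z|.
Lemma normE (z : C) : `|z| = (nc z)%:C.
Proof. reflexivity. Qed.

Lemma nc_ge0 z : 0 <= nc z.
Proof. by rewrite -ler0c -normE normr_ge0. Qed.

Lemma ncD x y : nc (x + y) <= nc x + nc y.
Proof. by rewrite -lecR rmorphD /= -!normE ler_normD. Qed.

Lemma ncM x y : nc (x * y) = nc x * nc y.
Proof. by apply: complexI; rewrite rmorphM /= -!normE normrM. Qed.

Lemma ncN x : nc (- x) = nc x.
Proof. by apply: complexI; rewrite -!normE normrN. Qed.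

Lemma ncB x y : nc (x - y) = nc (y - x).
Proof. by apply: complexI; rewrite -!normE distrC. Qed.

Lemma nc0 : nc 0 = 0.
Proof. by apply: complexI; rewrite -!normE normr0. Qed.

Lemma nc1 : nc 1 = 1.
Proof. by apply: complexI; rewrite -!normE normr1. Qed.

Lemma nc_eq0 x : (nc x == 0) = (x == 0).
Proof. by rewrite -(inj_eq (@complexI _)) -normE normr_eq0. Qed.

Lemma ncX x k : nc (x ^+ k) = nc x ^+ k.
Proof. by apply: complexI; rewrite rmorphXn /= -!normE normrX. Qed.

Lemma ncV x : nc (x^-1) = (nc x)^-1.
Proof. by apply: complexI; rewrite fmorphV /= -!normE normfV. Qed.

Lemma nc_real (r : R) : nc r%:C = `|r|.
Proof. by rewrite /nc normc_def /= expr0n /= addr0 sqrtr_sqr. Qed.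

Lemma nc_nat k : nc k%:R = k%:R.
Proof. by apply: complexI; rewrite -!normE normr_nat rmorph_nat. Qed.

Lemma nc_sum (I : Type) (s : seq I) (F : I -> C) :
  nc (\sum_(i <- s) F i) <= \sum_(i <- s) nc (F i).
Proof.
rewrite -lecR rmorph_sum /= -normE.
by have := ler_norm_sum s F xpredT.
Qed.

Lemma nc_lt x e : (nc x < e) = (`|x| < e%:C).
Proof. by rewrite normE ltcR. Qed.

End Norms.

Section Conv.
Variable R : realType.
Local Notation C := R[i].
Local Notation nc := (@nc R).

Definition cvg (S : nat -> C) (s : C) : Prop :=
  forall e : R, 0 < e -> exists N : nat, forall m, (N <= m)%N -> nc (S m - s) < e.

Definition psum (a : nat -> C) (w : C) (m : nat) : C := \sum_(k < m) a k * w ^+ k.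

Lemma ps_convE a w s : ps_conv a w s <-> cvg (psum a w) s.
Proof.
split=> H e he; have [N HN] := H e he; exists N => m hm; have := HN m hm;
by rewrite nc_lt.
Qed.

Lemma nc_gt0 w : (0 < nc w) = (w != 0).
Proof. by rewrite lt_def nc_ge0 andbT nc_eq0. Qed.

Lemma normC_gt0 (w : C) : (0 < `|w|) = (0 < nc w).
Proof. by rewrite normr_gt0 nc_gt0. Qed.

Lemma cvg_const c : cvg (fun _ => c) c.
Proof. by move=> e he; exists 0%N => m _; rewrite subrr nc0. Qed.

Lemma cvg_ev S T s : (exists N0, forall m, (N0 <= m)%N -> S m = T m) ->
  cvg S s -> cvg T s.
Proof.
move=> [N0 HN0] H e he; have [N HN] := H e he; exists (maxn N0 N) => m hm.
by rewrite -HN0 ?HN // (leq_trans _ hm) // ?leq_maxl ?leq_maxr.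
Qed.

Lemma cvg_add S T s t : cvg S s -> cvg T t ->
  cvg (fun m => S m + T m) (s + t).
Proof.
move=> HS HT e he.
have [N1 H1] := HS (e / 2) ltac:(by rewrite divr_gt0).
have [N2 H2] := HT (e / 2) ltac:(by rewrite divr_gt0).
exists (maxn N1 N2) => m hm.
have h1 := H1 m (leq_trans (leq_maxl _ _) hm).
have h2 := H2 m (leq_trans (leq_maxr _ _) hm).
have -> : S m + T m - (s + t) = (S m - s) + (T m - t) by rewrite addrACA opprD.
apply: le_lt_trans (ncD _ _) _; lra.
Qed.

Lemma cvg_scale c S s : cvg S s -> cvg (fun m => c * S m) (c * s).
Proof.
move=> HS e he.
have hc : 0 < nc c + 1 by have := nc_ge0 c; lra.
have [N HN] := HS (e / (nc c + 1)) ltac:(by rewrite divr_gt0).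
exists N => m hm; rewrite -mulrBr ncM.
have h := HN m hm; have h0 := nc_ge0 c; have h1 := nc_ge0 (S m - s).
have : nc (S m - s) * (nc c + 1) < e by rewrite -ltr_pdivlMr.
nra.
Qed.

Lemma cvg_shift1 S s : cvg S s -> cvg (fun m => S m.+1) s.
Proof.
move=> HS e he; have [N HN] := HS e he; exists N => m hm; exact: HN (leqW hm).
Qed.

Lemma cvg_unshift1 S s : cvg (fun m => S m.+1) s -> cvg S s.
Proof.
move=> HS e he; have [N HN] := HS e he; exists N.+1 => m hm.
case: m hm => // m hm; exact: HN.
Qed.

Lemma bernoulli (h : R) m : 0 <= h -> 1 + m%:R * h <= (1 + h) ^+ m.
Proof.
move=> h0; elim: m => [|m IH]; first by rewrite mul0r addr0 expr0.
rewrite exprS -natr1.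
have hp : 0 <= (1 + h) ^+ m by apply: exprn_ge0; lra.
have hm : 0 <= m%:R :> R by [].
nra.
Qed.

Lemma geom_small (q : R) : 0 <= q < 1 -> forall e, 0 < e ->
  exists N : nat, forall m, (N <= m)%N -> q ^+ m < e.
Proof.
move=> /andP[q0 q1] e he.
have [->|qn0] := eqVneq q 0.
  by exists 1%N => m hm; rewrite expr0n; case: m hm => //.
have qp : 0 < q by rewrite lt_def qn0 q0.
set h := q^-1 - 1.
have hp : 0 < h by rewrite /h subr_gt0 invf_gt1.
set x := (e * h)^-1.
have x0 : 0 <= x by rewrite /x invr_ge0 mulr_ge0 // ltW.
exists (Num.Def.archi_bound x) => m hm.
have hb := archi_boundP x0.
have hmx : x < m%:R.
  by apply: lt_le_trans hb _; rewrite ler_nat.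
have hB := bernoulli m (ltW hp).
have qm : q ^+ m = ((1 + h) ^+ m)^-1.
  by rewrite /h addrC subrK exprVn invrK.
rewrite qm.
have hpos : 0 < (1 + h) ^+ m by apply: exprn_gt0; lra.
rewrite invf_plt ?posrE //.
have : 1 < e * (m%:R * h).
  have hxe : x * (e * h) = 1 by rewrite /x mulVf // mulf_neq0 // gt_eqF.
  have heh : 0 < e * h by rewrite mulr_gt0.
  nra.
have he' : 0 <= e by lra.
have hmh : 0 <= m%:R * h by apply: mulr_ge0 => //; lra.
have hee : e * e^-1 = 1 by rewrite mulfV ?gt_eqF.
have hei : 0 < e^-1 by rewrite invr_gt0.
nra.
Qed.

Lemma geom_sum (q : R) m : 0 <= q < 1 ->
  \sum_(k < m) q ^+ k <= (1 - q)^-1.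
Proof.
move=> /andP[q0 q1].
have e : (1 - q) * \sum_(k < m) q ^+ k = 1 - q ^+ m.
  elim: m => [|m IH]; first by rewrite big_ord0 mulr0 expr0 subrr.
  by rewrite big_ord_recr /= mulrDr IH exprS; ring.
have hq : 0 < 1 - q by lra.
rewrite -(ler_pM2l hq) e mulfV ?gt_eqF //.
have : 0 <= q ^+ m by apply: exprn_ge0.
lra.
Qed.

Lemma cvg_zero_bound T (B q : R) : 0 <= q < 1 -> 0 <= B ->
  (forall m, nc (T m) <= B * q ^+ m) -> cvg T 0.
Proof.
move=> hq hB HT e he.
have hB1 : 0 < B + 1 by lra.
have hpos : 0 < e / (B + 1) by rewrite divr_gt0.
have [N HN] := geom_small hq hpos.
exists N => m hm; rewrite subr0.
have h1 := HN m hm; have h2 := HT m.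
have : q ^+ m * (B + 1) < e by rewrite -ltr_pdivlMr.
have : 0 <= q ^+ m by apply: exprn_ge0; case/andP: hq.
nra.
Qed.

End Conv.

Section Has.
Variable R : realType.
Local Notation C := R[i].
Local Notation nc := (@nc R).
Implicit Types (x v c w : C) (f g : C -> C) (a b : nat -> C).

Lemma psum_add a b w m :
  psum (fun k => a k + b k) w m = psum a w m + psum b w m.
Proof. by rewrite /psum -big_split /=; apply: eq_bigr => i _; rewrite mulrDl. Qed.

Lemma psum_scale c a w m : psum (fun k => c * a k) w m = c * psum a w m.
Proof. by rewrite /psum mulr_sumr; apply: eq_bigr => i _; rewrite mulrA. Qed.

Lemma psum_unshift a w m :
  psum a w m.+1 = a 0%N + w * psum (fun k => a k.+1) w m.
Proof.
rewrite /psum big_ord_recl expr0 mulr1; congr (_ + _).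
rewrite mulr_sumr; apply: eq_bigr => i _; rewrite lift0 exprS; ring.
Qed.

Lemma psum0 w m : psum (fun _ => 0) w m = 0.
Proof. by rewrite /psum big1 // => i _; rewrite mul0r. Qed.

Definition Ser x a (r : R) f :=
  forall z, 0 < nc (z - x) < r -> cvg (psum a (z - x)) (f z).

Definition Has x f v :=
  exists a (r : R), 0 < r /\ a 0%N = v /\ Ser x a r f.

Lemma Has_ext_r x f g v :
  (exists r0 : R, 0 < r0 /\ forall z, 0 < nc (z - x) < r0 -> f z = g z) ->
  Has x f v -> Has x g v.
Proof.
move=> [r0 [hr0 Hfg]] [a [r [hr [ha HS]]]].
exists a, (Num.min r r0); split; first by rewrite lt_min hr hr0.
split => // z /andP[z0]; rewrite lt_min => /andP[z1 z2].
rewrite -Hfg ?z0 ?z2 //; apply: HS; by rewrite z0 z1.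
Qed.

Lemma Has_ext x f g v : (forall z, z != x -> f z = g z) -> Has x f v -> Has x g v.
Proof.
move=> H; apply: Has_ext_r; exists 1; split => // z /andP[z0 _]; apply: H.
by move: z0; rewrite nc_gt0 subr_eq0.
Qed.

Lemma Has_const x c : Has x (fun _ => c) c.
Proof.
exists (fun k => if k is 0%N then c else 0), 1; split => //; split => // z _.
apply: cvg_unshift1; apply: (cvg_ev _ (cvg_const c)); exists 0%N => m _.
by rewrite psum_unshift psum0 mulr0 addr0.
Qed.

Lemma Has_add x f g v1 v2 : Has x f v1 -> Has x g v2 ->
  Has x (fun z => f z + g z) (v1 + v2).
Proof.
move=> [a [r [hr [ha HS]]]] [b [r' [hr' [hb HS']]]].
exists (fun k => a k + b k), (Num.min r r'); split; first by rewrite lt_min hr hr'.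
split; first by rewrite ha hb.
move=> z /andP[z0]; rewrite lt_min => /andP[z1 z2].
apply: (cvg_ev _ (cvg_add (HS z _) (HS' z _))); last by rewrite z0 z2.
- by exists 0%N => m _; rewrite psum_add.
- by rewrite z0 z1.
Qed.

Lemma Has_scale x c f v : Has x f v -> Has x (fun z => c * f z) (c * v).
Proof.
move=> [a [r [hr [ha HS]]]].
exists (fun k => c * a k), r; split => //; split; first by rewrite ha.
move=> z hz; apply: (cvg_ev _ (cvg_scale c (HS z hz))).
by exists 0%N => m _; rewrite psum_scale.
Qed.

Lemma Has_sum x (I : Type) (s : seq I) (F : I -> C -> C) (V : I -> C) :
  (forall i, Has x (F i) (V i)) ->
  Has x (fun z => \sum_(i <- s) F i z) (\sum_(i <- s) V i).
Proof.
move=> H; elim: s => [|i s IH].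
  rewrite big_nil; apply: (Has_ext _ (Has_const x 0)) => z _; by rewrite big_nil.
rewrite big_cons; apply: (Has_ext _ (Has_add (H i) IH)) => z _.
by rewrite big_cons.
Qed.

Lemma Has_mulw x f v : Has x f v -> Has x (fun z => (z - x) * f z) 0.
Proof.
move=> [a [r [hr [ha HS]]]].
exists (fun k => if k is k'.+1 then a k' else 0), r; split => //; split => //.
move=> z hz; apply: cvg_unshift1.
apply: (cvg_ev _ (cvg_scale (z - x) (HS z hz))).
by exists 0%N => m _; rewrite psum_unshift add0r.
Qed.

Lemma Has_mulwn x f v p : Has x f v ->
  exists v', Has x (fun z => (z - x) ^+ p * f z) v'.
Proof.
move=> H; elim: p => [|p [v' IH]].
  by exists v; apply: (Has_ext _ H) => z _; rewrite expr0 mul1r.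
exists 0; apply: (Has_ext _ (Has_mulw IH)) => z _; by rewrite exprS mulrA.
Qed.

Lemma Has_divw x f : Has x f 0 ->
  exists v', Has x (fun z => (z - x)^-1 * f z) v'.
Proof.
move=> [a [r [hr [ha HS]]]].
exists (a 1%N), (fun k => a k.+1), r; split => //; split => //.
move=> z hz; have hz0 : z - x != 0 by rewrite -nc_gt0; case/andP: hz.
have := cvg_scale (z - x)^-1 (cvg_shift1 (HS z hz)).
apply: cvg_ev; exists 0%N => m _.
by rewrite psum_unshift ha add0r mulrA mulVf // mul1r.
Qed.

Lemma abel x a (r : R) f rho : Ser x a r f -> 0 < rho -> rho < r ->
  exists K : R, 0 <= K /\ forall k, nc (a k) * rho ^+ k <= K.
Proof.
move=> HS h0 h1.
set z := x + rho%:C.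
have ez : z - x = rho%:C by rewrite /z addrC addKr.
have hz : 0 < nc (z - x) < r by rewrite ez nc_real ger0_norm ?ltW // h0 h1.
have [N HN] := HS z hz 1 ltr01.
set F := fun k => nc (a k * (z - x) ^+ k).
have Fe k : F k = nc (a k) * rho ^+ k.
  by rewrite /F ncM ncX ez nc_real ger0_norm // ltW.
exists (\sum_(j < N) F j + 2); split.
  by apply: addr_ge0 => //; apply: sumr_ge0 => j _; apply: nc_ge0.
move=> k; rewrite -Fe.
have hs : 0 <= \sum_(j < N) F j by apply: sumr_ge0 => j _; apply: nc_ge0.
case: (ltnP k N) => hk.
  rewrite (bigD1 (Ordinal hk)) //=.
  have : 0 <= \sum_(i < N | i != Ordinal hk) F i.
    by apply: sumr_ge0 => j _; apply: nc_ge0.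
  lra.
have e1 : a k * (z - x) ^+ k =
  (psum a (z - x) k.+1 - f z) - (psum a (z - x) k - f z).
  by rewrite /psum big_ord_recr /=; ring.
have h1' := HN k.+1 (leqW hk); have h2 := HN k hk.
have : F k <= nc (psum a (z - x) k.+1 - f z) + nc (psum a (z - x) k - f z).
  by rewrite /F e1; apply: le_trans (ncD _ _) _; rewrite ncN.
lra.
Qed.

Lemma Has_bound x f v : Has x f v ->
  exists (rho K : R), 0 < rho /\ forall z, 0 < nc (z - x) < rho -> nc (f z) <= K.
Proof.
move=> [a [r [hr [ha HS]]]].
set r1 := r / 2.
have hr1 : 0 < r1 by rewrite divr_gt0.
have hr1r : r1 < r by rewrite /r1; lra.
have [K [K0 HK]] := abel HS hr1 hr1r.
exists (r1 / 2), (2 * K + 1); split; first by rewrite divr_gt0.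
move=> z /andP[z0 z1].
have hz : 0 < nc (z - x) < r by rewrite z0 /=; apply: lt_trans z1 _; rewrite /r1; lra.
have [N HN] := HS z hz 1 ltr01.
have hN := HN N (leqnn N).
set w := z - x in hN z0 z1 *.
have q0 : 0 <= nc w / r1 < 1.
  rewrite divr_ge0 ?nc_ge0 ?ltW //= ltr_pdivrMr // mul1r; lra.
have hq2 : nc w / r1 <= 1 / 2.
  rewrite ler_pdivrMr //; lra.
have hsum : nc (psum a w N) <= 2 * K.
  apply: le_trans (nc_sum _ _) _.
  apply: (@le_trans _ _ (\sum_(k < N) K * (nc w / r1) ^+ k)).
    apply: ler_sum => k _; rewrite ncM ncX.
    have -> : nc w ^+ k = r1 ^+ k * (nc w / r1) ^+ k.
      by rewrite -exprMn mulrCA mulfV ?gt_eqF // mulr1.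
    rewrite mulrA; apply: ler_wpM2r; first by apply: exprn_ge0; case/andP: q0.
    exact: HK.
  rewrite -mulr_sumr.
  have := geom_sum N q0.
  have : (1 - nc w / r1)^-1 <= 2.
    rewrite invf_ple ?posrE //; lra.
  move=> h1 h2; rewrite mulrC; apply: le_trans (ler_wpM2r K0 (le_trans h2 h1)) _.
  by rewrite mulrC.
have h3 := ncD (psum a w N) (f z - psum a w N).
rewrite [X in nc X <= _]addrC subrK ncB in h3.
lra.
Qed.

End Has.

Section Div.
Variable R : realType.
Local Notation C := R[i].
Local Notation nc := (@nc R).
Implicit Types (x v c w : C) (f g : C -> C) (a b : nat -> C).

Fixpoint gdiv a (al : C) (k : nat) : C :=
  match k with 0%N => a 0%N / al | k'.+1 => (a k'.+1 - gdiv a al k') / al end.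

Definition gp a al (k : nat) : C := if k is k'.+1 then gdiv a al k' else 0.

Lemma gdivE a al k : al != 0 -> al * gdiv a al k = a k - gp a al k.
Proof.
by move=> h; case: k => [|k] /=; rewrite mulrC divfK // subr0.
Qed.

Lemma psum_gdiv a al w m : al != 0 ->
  (al + w) * psum (gdiv a al) w m = psum a w m + gp a al m * w ^+ m.
Proof.
move=> h; elim: m => [|m IH]; first by rewrite /psum !big_ord0 mulr0 /= mul0r add0r.
rewrite /psum !big_ord_recr /= mulrDr.
rewrite /psum in IH; rewrite IH.
have hm := gdivE a m h.
have -> : a m = al * gdiv a al m + gp a al m by rewrite hm subrK.
rewrite exprS; ring.
Qed.

Lemma gdiv_bound a al (K rho : R) : al != 0 -> 0 <= K -> 0 < rho ->
  rho <= nc al / 2 -> (forall k, nc (a k) * rho ^+ k <= K) ->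
  forall k, nc (gdiv a al k) * rho ^+ k <= 2 * K / nc al.
Proof.
move=> hal K0 r0 hr HK.
have na : 0 < nc al by rewrite nc_gt0.
set L := 2 * K / nc al.
have hL : L * nc al = 2 * K by rewrite /L divfK // gt_eqF.
have L0 : 0 <= L by rewrite /L divr_ge0 // ?mulr_ge0 // ltW.
elim=> [|k IH] /=.
  rewrite expr0 mulr1 ncM ncV.
  rewrite ler_pdivrMr // hL.
  have := HK 0%N; rewrite expr0 mulr1; lra.
rewrite ncM ncV mulrAC ler_pdivrMr // hL.
have h1 : nc (a k.+1 - gdiv a al k) <= nc (a k.+1) + nc (gdiv a al k).
  by apply: le_trans (ncD _ _) _; rewrite ncN.
have h2 := HK k.+1.
have hp : 0 <= rho ^+ k by apply: exprn_ge0; lra.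
rewrite exprS.
have hx : 0 <= rho ^+ k.+1 by apply: exprn_ge0; lra.
rewrite exprS in h2 hx.
have h3 : nc (gdiv a al k) * rho ^+ k * rho <= L * rho by apply: ler_wpM2r; lra.
have h4 : L * rho <= K by nra.
have h5 : nc (a k.+1 - gdiv a al k) * (rho * rho ^+ k)
   <= nc (a k.+1) * (rho * rho ^+ k) + nc (gdiv a al k) * (rho * rho ^+ k).
  by rewrite -mulrDl; apply: ler_wpM2r => //; apply: mulr_ge0 => //; lra.
have h6 : nc (gdiv a al k) * (rho * rho ^+ k) = nc (gdiv a al k) * rho ^+ k * rho.
  by rewrite mulrCA mulrC.
lra.
Qed.

Lemma Has_div x al f v : al != 0 -> Has x f v ->
  Has x (fun z => f z / (al + (z - x))) (v / al).
Proof.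
move=> hal [a [r [hr [ha HS]]]].
have na : 0 < nc al by rewrite nc_gt0.
set r1 := Num.min (r / 2) (nc al / 2).
have hr1 : 0 < r1 by rewrite lt_min !divr_gt0.
have hr1r : r1 < r.
  have : r1 <= r / 2 by rewrite /r1 ge_min lexx.
  lra.
have hr1a : r1 <= nc al / 2 by rewrite ge_min lexx orbT.
have [K [K0 HK]] := abel HS hr1 hr1r.
have Hb := gdiv_bound hal K0 hr1 hr1a HK.
exists (gdiv a al), r1; split => //; split; first by rewrite /= ha.
move=> z /andP[z0 z1].
have hz : 0 < nc (z - x) < r by rewrite z0 /=; apply: lt_trans z1 _.
set w := z - x in z0 z1 hz *.
have haw : al + w != 0.
  apply/negP => /eqP e; have : w = - al by rewrite -(addKr al w) e addr0.
  move=> ew; move: z1; rewrite ew ncN => h; lra.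
set L := 2 * K / nc al.
have L0 : 0 <= L by rewrite /L divr_ge0 // ?mulr_ge0 // ltW.
set q := nc w / r1.
have q0 : 0 <= q < 1.
  by rewrite /q divr_ge0 ?nc_ge0 ?ltW //= ltr_pdivrMr // mul1r.
have hT : cvg (fun m => gp a al m * w ^+ m) 0.
  apply: (@cvg_zero_bound _ _ (L * r1) q q0); first by apply: mulr_ge0 => //; lra.
  case=> [|k] /=; first by rewrite mul0r nc0 expr0 mulr1; apply: mulr_ge0 => //; lra.
  rewrite ncM ncX.
  have -> : nc w ^+ k.+1 = r1 ^+ k * r1 * q ^+ k.+1.
    by rewrite -exprSr -exprMn /q mulrCA mulfV ?gt_eqF // mulr1.
  have hk := Hb k.
  have hq : 0 <= q ^+ k.+1 by apply: exprn_ge0; case/andP: q0.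
  rewrite !mulrA; apply: ler_wpM2r => //; apply: ler_wpM2r; first by lra.
  exact: hk.
have := cvg_scale (al + w)^-1 (cvg_add (HS z hz) hT).
rewrite addr0 mulrC; apply: cvg_ev; exists 0%N => m _.
by rewrite -psum_gdiv // mulKf.
Qed.

Lemma Has_analytic x f v : Has x f v ->
  analytic_at x (fun z => if z == x then v else f z).
Proof.
move=> [a [r [hr [ha HS]]]]; exists r, a; split => // z hz; apply/ps_convE.
case: eqP => [->|/eqP hzx].
  rewrite subrr; apply: cvg_unshift1; apply: (cvg_ev _ (cvg_const v)).
  by exists 0%N => m _; rewrite psum_unshift mul0r addr0 ha.
apply: HS; rewrite nc_lt hz andbT nc_gt0 subr_eq0 //.
Qed.

Lemma laurentE x f : laurent_at x f <->
  exists m v, Has x (fun z => (z - x) ^+ m * f z) v.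
Proof.
split.
  move=> [m [r [a [hr H]]]]; exists m, (a 0%N), a, r; split => //; split => //.
  move=> z /andP[z0 z1]; apply/ps_convE; apply: H.
  by rewrite normC_gt0 z0 /= -nc_lt.
move=> [m [v [a [r [hr [ha HS]]]]]]; exists m, r, a; split => //.
move=> z /andP[z0 z1]; apply/ps_convE; apply: HS.
by rewrite -normC_gt0 z0 /= nc_lt.
Qed.

End Div.

From Stdlib Require Import IndefiniteDescription.
From mathcomp Require Import fingroup perm.

Section Mx.
Variable R : realType.
Local Notation C := R[i].
Local Notation nc := (@nc R).
Variable n : nat.
Local Notation Dmx := (@Dmx R n).
Local Notation Tmx := (@Tmx R n).

Lemma Dmx_mul i a (A : 'M[C]_n) :
  Dmx i a *m A = \matrix_(p, q) (if p == i then a * A p q else A p q).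
Proof.
apply/matrixP => p q; rewrite !mxE (bigD1 p) //= big1 ?addr0.
  by rewrite !mxE eqxx; case: (p == i); rewrite ?mul1r.
by move=> k /negbTE hk; rewrite !mxE eq_sym hk mul0r.
Qed.

Lemma mul_Dmx i a (A : 'M[C]_n) :
  A *m Dmx i a = \matrix_(p, q) (if q == i then A p q * a else A p q).
Proof.
apply/matrixP => p q; rewrite !mxE (bigD1 q) //= big1 ?addr0.
  by rewrite !mxE eqxx; case: (q == i); rewrite ?mulr1.
by move=> k /negbTE hk; rewrite !mxE hk mulr0.
Qed.

Lemma Dmx_inv i a : a != 0 -> Dmx i a *m Dmx i a^-1 = 1%:M.
Proof.
move=> ha; rewrite Dmx_mul; apply/matrixP => p q; rewrite !mxE.
have [e|hp] := eqVneq p i.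
  rewrite e.
  by have [e2|hq] := eqVneq i q; rewrite ?mulfV ?mulr0.
by case: (p == q).
Qed.

Lemma det_Dmx i a : \det (Dmx i a) = a.
Proof.
have -> : Dmx i a = diag_mx (\row_p (if p == i then a else 1)).
  by apply/matrixP => p q; rewrite !mxE; have [->|hpq] := eqVneq p q; rewrite ?mxE ?mulr1n ?mulr0n.
rewrite det_diag (bigD1 i) //= big1 ?mulr1 ?mxE ?eqxx //.
by move=> p /negbTE hp; rewrite mxE hp.
Qed.

Definition Tinvrow (i : 'I_n) (l : 'rV[C]_n) : 'rV[C]_n :=
  \row_q (if q == i then (l 0 i)^-1 else - l 0 q / l 0 i).

Lemma Tmx_row i (l : 'rV[C]_n) (A : 'M[C]_n) q : (Tmx i l *m A) i q = (l *m A) 0 q.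
Proof. by rewrite !mxE; apply: eq_bigr => p _; rewrite !mxE eqxx. Qed.

Lemma Tmx_rowN i (l : 'rV[C]_n) (A : 'M[C]_n) p q : p != i -> (Tmx i l *m A) p q = A p q.
Proof.
move=> /negbTE hp; rewrite !mxE (bigD1 p) //= big1 ?addr0.
  by rewrite !mxE hp eqxx mul1r.
by move=> k /negbTE hk; rewrite !mxE hp eq_sym hk mul0r.
Qed.

Lemma Tmx_inv i (l : 'rV[C]_n) : l 0 i != 0 -> Tmx i (Tinvrow i l) *m Tmx i l = 1%:M.
Proof.
move=> hl; apply/matrixP => p q.
case: (eqVneq p i) => [->|hp]; last by rewrite Tmx_rowN // !mxE (negbTE hp).
rewrite Tmx_row !mxE (bigD1 i) //= !mxE !eqxx /=.
rewrite (eq_bigr (fun k => - l 0 k / l 0 i * (k == q)%:R)); last first.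
  by move=> k /negbTE hk; rewrite !mxE hk.
have [e|hq] := eqVneq i q.
  rewrite -e big1 ?addr0 ?mulVf //.
  by move=> k /negbTE hk; rewrite hk mulr0.
rewrite (bigD1 q) 1?eq_sym //= big1 ?addr0 ?eqxx ?mulr1.
  by rewrite mulrC; field.
by move=> k /andP[_ /negbTE ->]; rewrite mulr0.
Qed.

Lemma Tinvrow_neq0 i (l : 'rV[C]_n) : l 0 i != 0 -> Tinvrow i l 0 i != 0.
Proof. by move=> h; rewrite mxE eqxx invr_eq0. Qed.

Lemma Tinvrow_nz i (l : 'rV[C]_n) : l 0 i != 0 -> Tinvrow i l != 0.
Proof.
move=> h; apply/negP => /eqP e; have := Tinvrow_neq0 h; by rewrite e mxE eqxx.
Qed.

Definition Gs (s : seq ('I_n * 'rV[C]_n)) (a : C) : 'M[C]_n :=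
  foldr (fun p acc => Tmx p.1 p.2 *m Dmx p.1 a *m acc) 1%:M s.

Definition Ginvs (s : seq ('I_n * 'rV[C]_n)) (a : C) : 'M[C]_n :=
  foldr (fun p acc => acc *m (Dmx p.1 a^-1 *m invmx (Tmx p.1 p.2))) 1%:M s.

Definition goodl (s : seq ('I_n * 'rV[C]_n)) :=
  forall p, p \in s -> (p.2 != 0) /\ Tmx p.1 p.2 \in unitmx.

Lemma Gs_inv s a : a != 0 -> goodl s -> Gs s a *m Ginvs s a = 1%:M.
Proof.
move=> ha; elim: s => [|p s IH] hs /=; first by rewrite mulmx1.
have [_ hu] := hs p (mem_head _ _).
have hs' : goodl s by move=> q hq; apply: hs; rewrite in_cons hq orbT.
rewrite -!mulmxA (mulmxA (Gs s a)) IH // mul1mx (mulmxA (Dmx _ _)) Dmx_inv //.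
by rewrite mul1mx mulmxV.
Qed.

Lemma Ginvs_inv s a : a != 0 -> goodl s -> Ginvs s a *m Gs s a = 1%:M.
Proof. by move=> ha hs; apply: mulmx1C; apply: Gs_inv. Qed.

Lemma Gs_rcons s p a : Gs (rcons s p) a = Gs s a *m (Tmx p.1 p.2 *m Dmx p.1 a).
Proof.
elim: s => [|q s IH] /=; first by rewrite mul1mx mulmx1.
by rewrite IH !mulmxA.
Qed.

Lemma det_Gs s a : \det (Gs s a) = \prod_(p <- s) \det (Tmx p.1 p.2) * a ^+ size s.
Proof.
elim: s => [|p s IH] /=; first by rewrite det1 big_nil mul1r.
rewrite !det_mulmx IH det_Dmx big_cons exprS; ring.
Qed.

Lemma goodl_prod s : goodl s -> \prod_(p <- s) \det (Tmx p.1 p.2) != 0.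
Proof.
elim: s => [|p s IH] hs; first by rewrite big_nil oner_eq0.
rewrite big_cons mulf_neq0 //.
  by have [_ hu] := hs p (mem_head _ _); rewrite unitmxE unitfE in hu.
by apply: IH => q hq; apply: hs; rewrite in_cons hq orbT.
Qed.

Lemma goodl_rcons s p : goodl s -> p.2 != 0 -> Tmx p.1 p.2 \in unitmx ->
  goodl (rcons s p).
Proof.
move=> hs h1 h2 q; rewrite mem_rcons in_cons => /orP[/eqP ->|hq]; first by [].
exact: hs.
Qed.

Lemma mx_choice (P : 'I_n -> 'I_n -> C -> Prop) :
  (forall i j, exists v, P i j v) -> exists V : 'M[C]_n, forall i j, P i j (V i j).
Proof.
move=> H.
exists (\matrix_(i, j) proj1_sig (constructive_indefinite_description _ (H i j))).
move=> i j; rewrite mxE; exact: proj2_sig.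
Qed.

Lemma nc_prod (I : Type) (s : seq I) (F : I -> C) :
  nc (\prod_(i <- s) F i) = \prod_(i <- s) nc (F i).
Proof.
elim: s => [|i s IH]; first by rewrite !big_nil nc1.
by rewrite !big_cons ncM IH.
Qed.

Lemma det_bound (A : 'M[C]_n) (K : R) : 0 <= K ->
  (forall i j, nc (A i j) <= K) -> nc (\det A) <= (\sum_(s : 'S_n) (1 : R)) * K ^+ n.
Proof.
move=> K0 HK; rewrite /determinant; apply: le_trans (nc_sum _ _) _.
apply: (@le_trans _ _ (\sum_(s : 'S_n) K ^+ n)).
  apply: ler_sum => s _; rewrite ncM ncX ncN nc1 expr1n mul1r nc_prod.
  have -> : K ^+ n = \prod_(i < n) K by rewrite prodr_const card_ord.
  apply: ler_prod => i _.
  by rewrite nc_ge0 HK.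
by rewrite mulr_suml; apply: ler_sum => s _; rewrite mul1r.
Qed.

End Mx.

Section Fin.
Variable R : realType.

Lemma fin_rad (I : finType) (P : I -> R -> R -> Prop) :
  (forall i rho K rho' K', P i rho K -> 0 < rho' -> rho' <= rho -> K <= K' -> P i rho' K') ->
  (forall i, exists rho K, 0 < rho /\ P i rho K) ->
  exists rho K, 0 < rho /\ 0 <= K /\ forall i, P i rho K.
Proof.
move=> Hm H.
suff [rho [K [h0 [hK hs]]]] : exists rho K, 0 < rho /\ 0 <= K /\
   forall i, i \in enum I -> P i rho K.
  by exists rho, K; split => //; split => // i; apply: hs; rewrite mem_enum.
elim: (enum I) => [|i s [rho [K [h0 [hK hs]]]]].
  by exists 1, 0; split => //; split.
have [rho' [K' [h0' hP]]] := H i.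
exists (Num.min rho rho'), (Num.max K K'); split; first by rewrite lt_min h0 h0'.
split; first by rewrite le_max hK.
move=> j; rewrite in_cons => /orP[/eqP ->|hj].
  by apply: (Hm _ _ _ _ _ hP); rewrite ?lt_min ?h0 ?h0' ?ge_min ?le_max ?lexx ?orbT.
by apply: (Hm _ _ _ _ _ (hs j hj)); rewrite ?lt_min ?h0 ?h0' ?ge_min ?le_max ?lexx.
Qed.

Lemma fin_ub (I : finType) (Q : I -> nat -> Prop) :
  (forall i, exists m, forall M, (m <= M)%N -> Q i M) ->
  exists m, forall i M, (m <= M)%N -> Q i M.
Proof.
move=> H.
suff [m hm] : exists m, forall i, i \in enum I -> forall M, (m <= M)%N -> Q i M.
  by exists m => i; apply: hm; rewrite mem_enum.
elim: (enum I) => [|i s [m hm]]; first by exists 0%N.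
have [m' hm'] := H i.
exists (maxn m m') => j; rewrite in_cons => /orP[/eqP -> M hM|hj M hM].
  by apply: hm'; rewrite (leq_trans _ hM) // leq_maxr.
by apply: hm => //; rewrite (leq_trans _ hM) // leq_maxl.
Qed.

End Fin.

Section Clos.
Variable R : realType.
Local Notation C := R[i].
Local Notation nc := (@nc R).
Local Notation u := (@u R).
Implicit Types (x v c w : C) (f g : C -> C).

Definition vfun (z : C) : C := (1 - z) / (1 + z).

Lemma Has_val x f v v' : v = v' -> Has x f v -> Has x f v'.
Proof. by move=> ->. Qed.

Lemma lau_ext x f g : (forall z, z != x -> f z = g z) -> laurent_at x f -> laurent_at x g.
Proof.
move=> H /laurentE [m [v Hm]]; apply/laurentE; exists m, v.
by apply: (Has_ext _ Hm) => z hz; rewrite H.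
Qed.

Lemma Lau_of_Has x f v : Has x f v -> laurent_at x f.
Proof.
move=> H; apply/laurentE; exists 0%N, v; apply: (Has_ext _ H) => z _.
by rewrite expr0 mul1r.
Qed.

Lemma Lau_add x f g : laurent_at x f -> laurent_at x g -> laurent_at x (fun z => f z + g z).
Proof.
move=> /laurentE [m1 [v1 H1]] /laurentE [m2 [v2 H2]]; apply/laurentE.
have [w1 H1'] := Has_mulwn m2 H1; have [w2 H2'] := Has_mulwn m1 H2.
exists (m1 + m2)%N, (w1 + w2); apply: (Has_ext _ (Has_add H1' H2')) => z _.
by rewrite exprD; ring.
Qed.

Lemma Lau_scale x c f : laurent_at x f -> laurent_at x (fun z => c * f z).
Proof.
move=> /laurentE [m [v H]]; apply/laurentE; exists m, (c * v).
by apply: (Has_ext _ (Has_scale c H)) => z _; ring.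
Qed.

Lemma Lau_sum x (I : Type) (s : seq I) (F : I -> C -> C) :
  (forall i, laurent_at x (F i)) -> laurent_at x (fun z => \sum_(i <- s) F i z).
Proof.
move=> H; elim: s => [|i s IH].
  by apply: (lau_ext _ (Lau_of_Has (Has_const x 0))) => z _; rewrite big_nil.
by apply: (lau_ext _ (Lau_add (H i) IH)) => z _; rewrite big_cons.
Qed.

Lemma two_neq0 : (2 : C) != 0.
Proof. by rewrite pnatr_eq0. Qed.

Lemma Lau_mulu f : laurent_at 1 f -> laurent_at 1 (fun z => u z * f z).
Proof.
move=> /laurentE [m [v H]]; apply/laurentE.
have H2 := Has_div two_neq0 (Has_mulw H).
exists m, (0 / 2); apply: (Has_ext _ H2) => z _.
rewrite /u; have -> : 2 + (z - 1) = z + 1 by ring.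
ring.
Qed.

Lemma Lau_mulinvu f : laurent_at 1 f -> laurent_at 1 (fun z => (u z)^-1 * f z).
Proof.
move=> /laurentE [m [v H]]; apply/laurentE.
have H2 := Has_add (Has_scale 2 H) (Has_mulw H).
exists m.+1, (2 * v + 0); apply: (Has_ext _ H2) => z hz.
have hz1 : z - 1 != 0 by rewrite subr_eq0.
rewrite /u invf_div exprSr.
field; by [].
Qed.

Lemma Lau_mulinvun k f : laurent_at 1 f -> laurent_at 1 (fun z => (u z) ^- k * f z).
Proof.
move=> H; elim: k => [|k IH].
  by apply: (lau_ext _ H) => z _; rewrite expr0 invr1 mul1r.
apply: (lau_ext _ (Lau_mulinvu IH)) => z _.
by rewrite mulrA -invfM -exprS.
Qed.

Lemma Has_step g : Has 1 g 0 -> exists v', Has 1 (fun z => (u z)^-1 * g z) v'.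
Proof.
move=> /Has_divw [v' H]; have H2 := Has_add (Has_scale 2 H) (Has_mulw H).
exists (2 * v' + 0); apply: (Has_ext _ H2) => z _.
rewrite /u invf_div; ring.
Qed.

Lemma Has_divn x al f v : al != 0 -> Has x f v -> forall k,
  exists v', Has x (fun z => f z / (al + (z - x)) ^+ k) v'.
Proof.
move=> hal H; elim=> [|k [v' IH]].
  by exists v; apply: (Has_ext _ H) => z _; rewrite expr0 invr1 mulr1.
exists (v' / al); apply: (Has_ext _ (Has_div hal IH)) => z _.
by rewrite exprS invfM; ring.
Qed.

Lemma Has_init f : laurent_at 1 f ->
  exists m0, forall M, (m0 <= M)%N -> exists v, Has 1 (fun z => u z ^+ M * f z) v.
Proof.
move=> /laurentE [m [v H]]; exists m => M hM.
have [w1 H1] := Has_mulwn (M - m) H.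
have [w2 H2] := Has_divn two_neq0 H1 M.
exists w2; apply: (Has_ext _ H2) => z _.
rewrite /u expr_div_n; have -> : 2 + (z - 1) = z + 1 by ring.
have -> : (z - 1) ^+ M = (z - 1) ^+ (M - m) * (z - 1) ^+ m by rewrite -exprD subnK.
ring.
Qed.

Definition opcl x (phi : C -> C) :=
  forall f c, Has x f c -> Has x (fun z => phi z * f z) (phi x * c).

Lemma one_neq0 : (1 : C) != 0. Proof. exact: oner_neq0. Qed.
Lemma mone_neq0 : (-1 : C) != 0. Proof. by rewrite oppr_eq0 oner_neq0. Qed.

Lemma opcl_u0 : opcl 0 u.
Proof.
move=> f c H.
have H3 := Has_div one_neq0 (Has_add (Has_mulw H) (Has_scale (-1) H)).
apply: (Has_val _ (Has_ext _ H3)).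
  by rewrite /u ?add0r ?sub0r ?addr0 ?subr0 ?divr1 ?invrN ?invr1; ring.
by move=> z _; rewrite /u subr0 [1 + z]addrC; ring.
Qed.

Lemma opcl_uinv0 : opcl 0 (fun z => (u z)^-1).
Proof.
move=> f c H.
have H3 := Has_div mone_neq0 (Has_add (Has_mulw H) H).
apply: (Has_val _ (Has_ext _ H3)).
  by rewrite /u ?add0r ?sub0r ?addr0 ?subr0 ?divr1 ?invrN ?invr1; ring.
by move=> z _; rewrite /u invf_div subr0 [-1 + z]addrC; ring.
Qed.

Lemma opcl_v0 : opcl 0 vfun.
Proof.
move=> f c H.
have H3 := Has_div one_neq0 (Has_add H (Has_scale (-1) (Has_mulw H))).
apply: (Has_val _ (Has_ext _ H3)).
  by rewrite /vfun ?add0r ?sub0r ?addr0 ?subr0 ?divr1 ?invrN ?invr1; ring.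
by move=> z _; rewrite /vfun subr0; ring.
Qed.

Lemma opcl_vinv0 : opcl 0 (fun z => (vfun z)^-1).
Proof.
move=> f c H.
have H3 := Has_scale (-1) (Has_div mone_neq0 (Has_add H (Has_mulw H))).
apply: (Has_val _ (Has_ext _ H3)).
  by rewrite /vfun ?add0r ?sub0r ?addr0 ?subr0 ?divr1 ?invrN ?invr1; ring.
move=> z _; rewrite /vfun invf_div subr0.
have -> : 1 - z = - (-1 + z) by ring.
rewrite invrN; ring.
Qed.

End Clos.

Section MxClos.
Variable R : realType.
Local Notation C := R[i].
Local Notation nc := (@nc R).
Local Notation u := (@u R).
Variable n : nat.
Local Notation Dmx := (@Dmx R n).
Local Notation Tmx := (@Tmx R n).
Local Notation Gs := (@Gs R n).
Local Notation Ginvs := (@Ginvs R n).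
Implicit Types (F G : C -> 'M[C]_n) (V A : 'M[C]_n) (x : C) (phi : C -> C).

Definition Hasm x F V := forall i j, Has x (fun z => F z i j) (V i j).

Lemma Hasm_ext_r x F G V :
  (exists r0 : R, 0 < r0 /\ forall z, 0 < nc (z - x) < r0 -> F z = G z) ->
  Hasm x F V -> Hasm x G V.
Proof.
move=> [r0 [h0 H]] HF i j; apply: (Has_ext_r _ (HF i j)).
by exists r0; split => // z hz; rewrite H.
Qed.

Lemma Hasm_ext x F G V : (forall z : C, z != x -> F z = G z) -> Hasm x F V -> Hasm x G V.
Proof. by move=> H HF i j; apply: (Has_ext _ (HF i j)) => z hz; rewrite H. Qed.

Lemma Hasm_mull x A F V : Hasm x F V -> Hasm x (fun z => A *m F z) (A *m V).
Proof.
move=> HF i j; rewrite mxE.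
have := Has_sum (index_enum 'I_n) (fun k => Has_scale (A i k) (HF k j)).
by apply: Has_ext => z _; rewrite mxE.
Qed.

Lemma Hasm_Dl x phi i F V : opcl x phi -> Hasm x F V ->
  Hasm x (fun z => Dmx i (phi z) *m F z) (Dmx i (phi x) *m V).
Proof.
move=> Hp HF p q; rewrite Dmx_mul mxE.
case: (eqVneq p i) => [e|hp].
  by apply: (Has_ext _ (Hp _ _ (HF p q))) => z _; rewrite Dmx_mul mxE e eqxx.
by apply: (Has_ext _ (HF p q)) => z _; rewrite Dmx_mul mxE (negbTE hp).
Qed.

Lemma Hasm_scale x phi F V : opcl x phi -> Hasm x F V ->
  Hasm x (fun z => phi z *: F z) (phi x *: V).
Proof.
move=> Hp HF p q; rewrite mxE.
by apply: (Has_ext _ (Hp _ _ (HF p q))) => z _; rewrite mxE.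
Qed.

Lemma opcl_inv_expn x phi k : opcl x (fun z => (phi z)^-1) ->
  opcl x (fun z => (phi z) ^- k).
Proof.
move=> Hp; elim: k => [|k IH] f c H.
  by apply: (Has_val _ (Has_ext _ H)); rewrite ?expr0 ?invr1 ?mul1r // => z _; rewrite expr0 invr1 mul1r.
apply: (Has_val _ (Has_ext _ (Hp _ _ (IH _ _ H)))).
  by rewrite exprS invfM mulrA.
by move=> z _; rewrite exprS invfM mulrA.
Qed.

Lemma Hasm_Gs x phi s : opcl x phi -> Hasm x (fun z => Gs s (phi z)) (Gs s (phi x)).
Proof.
move=> Hp; elim: s => [|p s IH] /=.
  by move=> i j; apply: Has_const.
have H := Hasm_mull (Tmx p.1 p.2) (Hasm_Dl p.1 Hp IH).
by apply: (Hasm_ext _ (eq_ind _ (fun V => Hasm x _ V) H _ (mulmxA _ _ _))) => z _; rewrite mulmxA.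
Qed.

Lemma Hasm_bound x F V : Hasm x F V ->
  exists rho K : R, 0 < rho /\ 0 <= K /\
    forall z, 0 < nc (z - x) < rho -> forall i j, nc (F z i j) <= K.
Proof.
move=> HF.
have := @fin_rad R ('I_n * 'I_n)%type
  (fun ij rho K => forall z, 0 < nc (z - x) < rho -> nc (F z ij.1 ij.2) <= K).
case.
- move=> ij rho K rho' K' H h0 h1 h2 z /andP[z0 z1].
  by apply: le_trans (H z _) h2; rewrite z0 (lt_le_trans z1 h1).
- move=> [i j]; have [rho [K [h0 H]]] := Has_bound (HF i j).
  by exists rho, K; split.
move=> rho [K [h0 [hK H]]]; exists rho, K; split => //; split => // z hz i j.
exact: (H (i, j) z hz).
Qed.

Lemma analytic_ext x f g : (forall z, f z = g z) -> analytic_at x f -> analytic_at x g.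
Proof.
move=> H [r [a [hr Ha]]]; exists r, a; split => // z hz; rewrite -H; exact: Ha.
Qed.

Lemma regular_of_Hasm x F V : Hasm x F V -> V \in unitmx -> regular_at x F.
Proof.
move=> HF hV; exists (fun z => if z == x then V else F z); split.
  exists 1; split => // z /andP[z0 _].
  have hz : z != x by rewrite -subr_eq0 -normr_gt0.
  by rewrite (negbTE hz).
split; last by rewrite eqxx.
move=> i j; apply: (analytic_ext _ (Has_analytic (HF i j))) => z.
by case: (z == x).
Qed.

Lemma Hasm_laurent x F V : Hasm x F V -> forall i j, laurent_at x (fun z => F z i j).
Proof. by move=> HF i j; apply: Lau_of_Has (HF i j). Qed.

Definition Laum F := forall i j, laurent_at 1 (fun z => F z i j).

Lemma Laum_ext F G : (forall z : C, z != 1 -> F z = G z) -> Laum F -> Laum G.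
Proof. by move=> H HF i j; apply: (lau_ext _ (HF i j)) => z hz; rewrite H. Qed.

Lemma Laum_mulr F A : Laum F -> Laum (fun z => F z *m A).
Proof.
move=> HF i j.
have := Lau_sum (index_enum 'I_n) (fun k => Lau_scale (A k j) (HF i k)).
by apply: lau_ext => z _; rewrite mxE; apply: eq_bigr => k _; rewrite mulrC.
Qed.

Lemma Laum_Dr F i : Laum F -> Laum (fun z => F z *m Dmx i (u z)).
Proof.
move=> HF p q; case: (eqVneq q i) => [e|hq].
  by apply: (lau_ext _ (Lau_mulu (HF p q))) => z _; rewrite mul_Dmx mxE e eqxx mulrC.
by apply: (lau_ext _ (HF p q)) => z _; rewrite mul_Dmx mxE (negbTE hq).
Qed.

Lemma Laum_Gs s F : Laum F -> Laum (fun z => F z *m Gs s (u z)).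
Proof.
elim: s F => [|p s IH] F HF /=.
  by apply: (Laum_ext _ HF) => z _; rewrite mulmx1.
have := IH _ (Laum_Dr p.1 (Laum_mulr (Tmx p.1 p.2) HF)).
by apply: Laum_ext => z _; rewrite !mulmxA.
Qed.

Lemma Laum_scale_uinvn k F : Laum F -> Laum (fun z => (u z) ^- k *: F z).
Proof.
move=> HF i j; apply: (lau_ext _ (Lau_mulinvun k (HF i j))) => z _.
by rewrite mxE.
Qed.

Lemma rat_ext (f g : C -> C) : (forall z, f z = g z) -> is_ratfun f -> is_ratfun g.
Proof.
move=> H [p [q [hq Hpq]]]; exists p, q; split => // z hz; rewrite -H; exact: Hpq.
Qed.

Lemma rat_const (c : C) : is_ratfun (fun _ => c).
Proof. by exists c%:P, 1; split; rewrite ?oner_neq0 // => z _; rewrite !hornerE divr1. Qed.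

Lemma rat_add (f g : C -> C) : is_ratfun f -> is_ratfun g -> is_ratfun (fun z => f z + g z).
Proof.
move=> [p1 [q1 [h1 H1]]] [p2 [q2 [h2 H2]]].
exists (p1 * q2 + p2 * q1), (q1 * q2); split; first by rewrite mulf_neq0.
move=> z; rewrite hornerM mulf_eq0 negb_or => /andP[hz1 hz2].
rewrite H1 // H2 // !(hornerM, hornerD); field.
by rewrite hz1 hz2.
Qed.

Lemma rat_mul (f g : C -> C) : is_ratfun f -> is_ratfun g -> is_ratfun (fun z => f z * g z).
Proof.
move=> [p1 [q1 [h1 H1]]] [p2 [q2 [h2 H2]]].
exists (p1 * p2), (q1 * q2); split; first by rewrite mulf_neq0.
move=> z; rewrite hornerM mulf_eq0 negb_or => /andP[hz1 hz2].
rewrite H1 // H2 // !hornerM; field.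
by rewrite hz1 hz2.
Qed.

Lemma rat_sum (I : Type) (s : seq I) (F : I -> C -> C) :
  (forall i, is_ratfun (F i)) -> is_ratfun (fun z => \sum_(i <- s) F i z).
Proof.
move=> H; elim: s => [|i s IH].
  by apply: (rat_ext _ (rat_const 0)) => z; rewrite big_nil.
by apply: (rat_ext _ (rat_add (H i) IH)) => z; rewrite big_cons.
Qed.

Lemma poly_neq0_at (q : {poly C}) (z0 : C) : q.[z0] != 0 -> q != 0.
Proof. by apply: contraNneq => ->; rewrite horner0. Qed.

Lemma hXaC (a z : C) : ('X + a%:P).[z] = z + a.
Proof. by rewrite hornerD hornerX hornerC. Qed.

Lemma rat_u : is_ratfun u.
Proof.
exists ('X + (-1)%:P), ('X + 1%:P); split.
  by apply: (@poly_neq0_at _ 0); rewrite hXaC add0r oner_neq0.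
by move=> z _; rewrite /u !hXaC.
Qed.

Lemma rat_uinv : is_ratfun (fun z => (u z)^-1).
Proof.
exists (('X + 1%:P) * ('X + 1%:P)), (('X + (-1)%:P) * ('X + 1%:P)); split.
  apply: (@poly_neq0_at _ 0); rewrite hornerM !hXaC !add0r mulN1r oppr_eq0.
  exact: oner_neq0.
move=> z; rewrite !hornerM !hXaC mulf_eq0 negb_or => /andP[hz1 hz2].
rewrite /u invf_div; field; by rewrite hz1 hz2.
Qed.

Definition ratm F := forall i j, is_ratfun (fun z => F z i j).

Lemma ratm_mul F G : ratm F -> ratm G -> ratm (fun z => F z *m G z).
Proof.
move=> HF HG i j.
have := rat_sum (index_enum 'I_n) (fun k => rat_mul (HF i k) (HG k j)).
by apply: rat_ext => z; rewrite mxE.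
Qed.

Lemma ratm_const A : ratm (fun _ => A).
Proof. by move=> i j; apply: rat_const. Qed.

Lemma ratm_scale phi F : is_ratfun phi -> ratm F -> ratm (fun z => phi z *: F z).
Proof.
move=> Hp HF i j; apply: (rat_ext _ (rat_mul Hp (HF i j))) => z; by rewrite mxE.
Qed.

Lemma ratm_D phi i : is_ratfun phi -> ratm (fun z => Dmx i (phi z)).
Proof.
move=> Hp p q.
case: (eqVneq p q) => [e|hpq].
  case: (eqVneq p i) => [e2|hpi].
    by apply: (rat_ext _ Hp) => z; rewrite mxE e2 -e e2 !eqxx.
  by apply: (rat_ext _ (rat_const 1)) => z; rewrite mxE e eqxx -e (negbTE hpi).
by apply: (rat_ext _ (rat_const 0)) => z; rewrite mxE (negbTE hpq).
Qed.

Lemma ratm_Gs s phi : is_ratfun phi -> ratm (fun z => Gs s (phi z)).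
Proof.
move=> Hp; elim: s => [|p s IH] /=; first exact: ratm_const.
exact: ratm_mul (ratm_mul (ratm_const _) (ratm_D _ Hp)) IH.
Qed.

Lemma ratm_Ginvs s phi : is_ratfun (fun z => (phi z)^-1) ->
  ratm (fun z => Ginvs s (phi z)).
Proof.
move=> Hp; elim: s => [|p s IH] /=; first exact: ratm_const.
exact: ratm_mul IH (ratm_mul (ratm_D _ Hp) (ratm_const _)).
Qed.

Lemma rat_expn (f : C -> C) k : is_ratfun f -> is_ratfun (fun z => f z ^+ k).
Proof.
move=> H; elim: k => [|k IH].
  by apply: (rat_ext _ (rat_const 1)) => z; rewrite expr0.
by apply: (rat_ext _ (rat_mul H IH)) => z; rewrite exprS.
Qed.

End MxClos.

From mathcomp Require Import fingroup perm.

Section Aux.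
Variable R : realType.
Local Notation C := R[i].
Local Notation nc := (@nc R).
Local Notation u := (@u R).
Variable n : nat.
Local Notation Gs := (@Gs R n).
Local Notation Ginvs := (@Ginvs R n).

Lemma germ_of x (A B : C -> 'M[C]_n) :
  (exists r : R, 0 < r /\ forall z, 0 < nc (z - x) < r -> A z = B z) -> germ_eq x A B.
Proof.
move=> [r [hr H]]; exists r; split => // z /andP[z0 z1]; apply: H.
by rewrite -normC_gt0 z0 /= nc_lt.
Qed.

Lemma germ_to x (A B : C -> 'M[C]_n) : germ_eq x A B ->
  exists r : R, 0 < r /\ forall z, 0 < nc (z - x) < r -> A z = B z.
Proof.
move=> [r [hr H]]; exists r; split => // z /andP[z0 z1]; apply: H.
by rewrite normC_gt0 z0 /= -nc_lt.
Qed.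

Lemma u_neq0' (z : C) : z != 1 -> z != -1 -> u z != 0.
Proof.
move=> h1 h2; rewrite /u mulf_neq0 // ?subr_eq0 // invr_eq0.
by rewrite -[1]opprK subr_eq0.
Qed.

Lemma u_neq0 (z : C) : 0 < nc (z - 1) < 1 -> u z != 0.
Proof.
move=> /andP[z0 z1]; apply: u_neq0'; first by rewrite -subr_eq0 -nc_gt0.
apply/negP => /eqP e; move: z1; rewrite e -opprD ncN (_ : (1 + 1 : C) = 2%:R) ?nc_nat //; lra.
Qed.

Lemma Cmat_inv s a k : a != 0 -> goodl s ->
  (a ^- k *: Gs s a) *m (a ^+ k *: Ginvs s a) = 1%:M.
Proof.
move=> ha hs; rewrite -scalemxAl -scalemxAr scalerA Gs_inv //.
by rewrite mulVf ?scale1r // expf_neq0.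
Qed.

Lemma regular_ext x (F G : C -> 'M[C]_n) :
  (forall z, z != x -> F z = G z) -> regular_at x F -> regular_at x G.
Proof.
move=> H [Bf [[r [hr Hg]] HB]]; exists Bf; split => //.
exists r; split => // z hz; rewrite -H ?Hg //.
by case/andP: hz; rewrite normr_gt0 subr_eq0.
Qed.

Lemma u_inv (z : C) : z != 0 -> u z^-1 = vfun z.
Proof.
move=> hz; rewrite /u /vfun.
have e1 : z^-1 - 1 = z^-1 * (1 - z) by rewrite mulrBr mulr1 mulVf.
have e2 : z^-1 + 1 = z^-1 * (1 + z) by rewrite mulrDr mulr1 mulVf.
rewrite e1 e2 invfM invrK.
have -> : z^-1 * (1 - z) * (z * (1 + z)^-1) = (z^-1 * z) * ((1 - z) * (1 + z)^-1) by ring.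
by rewrite mulVf // mul1r.
Qed.

End Aux.

From mathcomp Require Import fingroup perm.

Section Main.
Variable R : realType.
Local Notation C := R[i].
Local Notation nc := (@nc R).
Local Notation u := (@u R).
Variable n : nat.
Local Notation Dmx := (@Dmx R n).
Local Notation Tmx := (@Tmx R n).
Local Notation Gs := (@Gs R n).
Local Notation Ginvs := (@Ginvs R n).
Local Notation goodl := (@goodl R n).
Local Notation Hasm := (@Hasm R n).

Variables (M1 B : C -> 'M[C]_n).
Hypothesis hM : forall i j, laurent_at 1 (fun z => M1 z i j).
Hypothesis hB : forall i j, laurent_at 1 (fun z => B z i j).
Hypothesis hMB : germ_eq 1 (fun z => M1 z *m B z) (fun _ => 1%:M).

Lemma init_ex : exists M V0, Hasm 1 (fun z => u z ^+ M *: M1 z) V0.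
Proof.
have [M HM] := @fin_ub ('I_n * 'I_n)%type
  (fun ij M => exists v, Has 1 (fun z => u z ^+ M * M1 z ij.1 ij.2) v)
  (fun ij => Has_init (hM ij.1 ij.2)).
have [V0 HV] := mx_choice (P := fun i j v => Has 1 (fun z => u z ^+ M * M1 z i j) v)
  (fun i j => HM (i, j) M (leqnn M)).
exists M, V0 => i j; apply: (Has_ext _ (HV i j)) => z _; by rewrite mxE.
Qed.

Lemma B_bound : exists (M' : nat) (rho K : R), 0 < rho /\
  forall z, 0 < nc (z - 1) < rho -> nc (\det ((z - 1) ^+ M' *: B z)) <= K.
Proof.
have [M HM] : exists m, forall ij M, (m <= M)%N ->
    exists v, Has 1 (fun z => (z - 1) ^+ M * B z ij.1 ij.2) v.
  apply: fin_ub => -[i j]; have /laurentE [m [v H]] := hB i j; exists m => M hMm /=.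
  have [w Hw] := Has_mulwn (M - m) H; exists w.
  by apply: (Has_ext _ Hw) => z _; rewrite mulrA -exprD subnK.
have [W HW] := mx_choice (P := fun i j v => Has 1 (fun z => (z - 1) ^+ M * B z i j) v)
  (fun i j => HM (i, j) M (leqnn M)).
have HW' : Hasm 1 (fun z => (z - 1) ^+ M *: B z) W.
  by move=> i j; apply: (Has_ext _ (HW i j)) => z _; rewrite mxE.
have [rho [K [h0 [hK Hb]]]] := Hasm_bound HW'.
exists M, rho, ((\sum_(s : 'S_n) (1 : R)) * K ^+ n); split => // z hz.
by apply: det_bound => // i j; apply: Hb.
Qed.

Variable M : nat.
Variable V0 : 'M[C]_n.
Hypothesis HV0 : Hasm 1 (fun z => u z ^+ M *: M1 z) V0.

Definition StageP (sl : seq ('I_n * 'rV[C]_n)) (F : C -> 'M[C]_n) (V : 'M[C]_n) (r : R) :=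
  [/\ goodl sl, Hasm 1 F V, 0 < r &
    forall z, 0 < nc (z - 1) < r -> Gs sl (u z) *m F z = u z ^+ M *: M1 z].

Lemma stage0 : StageP [::] (fun z => u z ^+ M *: M1 z) V0 1.
Proof. by split => // z _; rewrite /= mul1mx. Qed.

Lemma stage_step sl F V r : StageP sl F V r -> V \notin unitmx ->
  exists sl' F' V' r', size sl' = (size sl).+1 /\ StageP sl' F' V' r'.
Proof.
move=> [hg HF hr HE] hV.
have hd : \det V == 0 by move: hV; rewrite unitmxE unitfE negbK.
have [l hl0 hlV] := det0P hd.
have [i hi] : exists i, l 0 i != 0.
  case: (pickP (fun i => l 0 i != 0)) => [i hi|H]; first by exists i.
  move/negP: hl0; case; apply/eqP/matrixP => a b; rewrite ord1 mxE.
  by have := H b => /negbFE/eqP.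
set T := Tmx i l.
have HTF := Hasm_mull T HF.
have hrow q : (T *m V) i q = 0 by rewrite /T Tmx_row hlV mxE.
set F' := fun z => Dmx i (u z)^-1 *m (T *m F z).
have Hent : forall p q, exists v, Has 1 (fun z => F' z p q) v.
  move=> p q; case: (eqVneq p i) => [e|hp].
    have H0 := HTF p q; rewrite e hrow in H0.
    have [v' Hv'] := Has_step H0; exists v'.
    by apply: (Has_ext _ Hv') => z _; rewrite /F' Dmx_mul mxE e eqxx.
  exists ((T *m V) p q); apply: (Has_ext _ (HTF p q)) => z _.
  by rewrite /F' Dmx_mul mxE (negbTE hp).
have [V' HV'] := mx_choice (P := fun p q v => Has 1 (fun z => F' z p q) v) Hent.
set l' := Tinvrow i l.
have hTinv := Tmx_inv hi.
exists (rcons sl (i, l')), F', V', (Num.min r 1); split; first by rewrite size_rcons.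
split => //.
- apply: goodl_rcons => //=; first exact: Tinvrow_nz.
  by case: (mulmx1_unit hTinv).
- by rewrite lt_min hr ltr01.
move=> z /andP[z0]; rewrite lt_min => /andP[z1 z2].
have ha : u z != 0 by apply: u_neq0; rewrite z0 z2.
rewrite Gs_rcons /= /F' -!mulmxA (mulmxA (Dmx i (u z))) Dmx_inv // mul1mx.
rewrite (mulmxA (Tmx i l')) hTinv mul1mx HE //.
by rewrite z0 z1.
Qed.

Variables (M' : nat) (rhoB KB : R).
Hypothesis hrhoB : 0 < rhoB.
Hypothesis HBb : forall z, 0 < nc (z - 1) < rhoB -> nc (\det ((z - 1) ^+ M' *: B z)) <= KB.

Lemma stage_bound sl F V r : StageP sl F V r -> (size sl <= n * M + n * M')%N.
Proof.
move=> [hg HF hr HE]; rewrite leqNgt; apply/negP => hs.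
have [rF [KF [hrF [hKF HFb]]]] := Hasm_bound HF.
set DF := (\sum_(s : 'S_n) (1 : R)) * KF ^+ n.
have [r0 [hr0 HMB]] := germ_to hMB.
set ka := \prod_(p <- sl) \det (Tmx p.1 p.2).
have hka : ka != 0 := goodl_prod hg.
set rho := Num.min (Num.min (Num.min r rF) (Num.min rhoB r0)) (1 / 2).
have hrho : 0 < rho by rewrite !lt_min hr hrF hrhoB hr0 /=; lra.
have hrr : rho <= r /\ rho <= rF /\ rho <= rhoB /\ rho <= r0 /\ rho <= 1 / 2.
  by rewrite !ge_min !lexx /= ?orbT.
have DF0 : 0 <= DF.
  by rewrite /DF mulr_ge0 ?exprn_ge0 // sumr_ge0.
set P := nc ka * DF * KB.
set de := Num.min (rho / 2) ((2 * (`|P| + 1))^-1).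
have hP1 : 0 < 2 * (`|P| + 1) by have := normr_ge0 P; lra.
have hde : 0 < de by rewrite lt_min divr_gt0 //= invr_gt0.
have hde1 : de <= rho / 2 by rewrite ge_min lexx.
have hde2 : de <= (2 * (`|P| + 1))^-1 by rewrite ge_min lexx orbT.
set z := 1 + de%:C.
have ez : z - 1 = de%:C by rewrite /z addrC addKr.
have hz : nc (z - 1) = de by rewrite ez nc_real ger0_norm // ltW.
case: hrr => h1 [h2 [h3 [h4 h5]]].
have hzr (rr : R) : rho <= rr -> 0 < nc (z - 1) < rr.
  by move=> hrr; rewrite hz hde /=; lra.
have E1 := HE z (hzr r h1).
have E2 := HMB z (hzr r0 h4).
have b2 := HBb (hzr rhoB h3).
have b1 : nc (\det (F z)) <= DF.
  by apply: det_bound => // i j; apply: HFb; apply: hzr.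
set t := z - 1 in ez hz E1 E2 b2 *.
set y := (z + 1)^-1.
have hu : u z = t * y by [].
have ht : t != 0 by rewrite -nc_gt0 hz.
have hy : y != 0.
  rewrite invr_eq0; apply/negP => /eqP e.
  have : t = -2 by rewrite /t -[z](addrK 1) e sub0r -opprD.
  by move=> e2; move: hz; rewrite e2 ncN nc_nat => e3; lra.
set s := size sl in hs *.
set d := (s - (n * M + n * M'))%N.
have hd1 : (1 <= d)%N by rewrite /d subn_gt0.
have hsd : s = (n * M + n * M' + d)%N by rewrite /d subnKC // ltnW.
have d1 : ka * (u z) ^+ s * \det (F z) = (u z) ^+ (n * M) * \det (M1 z).
  have := congr1 determinant E1.
  by rewrite det_mulmx det_Gs detZ -exprM mulnC.
have d2 : \det (M1 z) * \det (B z) = 1.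
  by have := congr1 determinant E2; rewrite det_mulmx det1.
have d3 : \det (t ^+ M' *: B z) = t ^+ (n * M') * \det (B z).
  by rewrite detZ -exprM mulnC.
set X := ka * y ^+ (n * M') * y ^+ d * t ^+ d * \det (F z) * \det (t ^+ M' *: B z).
have key : (u z) ^+ (n * M) * t ^+ (n * M') * X = (u z) ^+ (n * M) * t ^+ (n * M') * 1.
  have -> : (u z) ^+ (n * M) * t ^+ (n * M') * X =
      (ka * (u z) ^+ s * \det (F z)) * \det (t ^+ M' *: B z).
    rewrite /X hsd !exprD hu !exprMn; ring.
  rewrite d1 d3.
  have -> : (u z) ^+ (n * M) * t ^+ (n * M') * 1 =
    (u z) ^+ (n * M) * t ^+ (n * M') * (\det (M1 z) * \det (B z)) by rewrite d2.
  ring.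
have hX : X = 1.
  apply: (mulfI _ key); rewrite mulf_neq0 ?expf_neq0 //.
  by rewrite hu mulf_neq0.
have ny : nc y <= 1.
  rewrite /y ncV invf_le1 //; last first.
    by rewrite nc_gt0; rewrite -invr_eq0.
  have e2 : z + 1 = 2 + t by rewrite /t; ring.
  have := ncD (2 + t) (- t); rewrite addrK ncN e2 nc_nat.
  rewrite hz; lra.
have ny0 := nc_ge0 y.
have nX := congr1 nc hX.
rewrite nc1 /X !ncM !ncX hz in nX.
have a2 : nc y ^+ (n * M') <= 1 by apply: exprn_ile1.
have a3 : nc y ^+ d <= 1 by apply: exprn_ile1.
have a4 : de ^+ d <= de.
  have -> : d = d.-1.+1 by rewrite prednK.
  rewrite exprS.
  have : de ^+ d.-1 <= 1 by apply: exprn_ile1; lra.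
  have : 0 <= de ^+ d.-1 by apply: exprn_ge0; lra.
  nra.
have KB0 : 0 <= KB by apply: le_trans b2; apply: nc_ge0.
have g0 := nc_ge0 ka.
have g1 : 0 <= nc y ^+ (n * M') by apply: exprn_ge0.
have g2 : 0 <= nc y ^+ d by apply: exprn_ge0.
have g3 : 0 <= de ^+ d by apply: exprn_ge0; lra.
have g4 := nc_ge0 (\det (F z)).
have g5 := nc_ge0 (\det (t ^+ M' *: B z)).
have s1 : nc ka * nc y ^+ (n * M') <= nc ka by apply: ler_piMr.
have s2 : nc ka * nc y ^+ (n * M') * nc y ^+ d <= nc ka.
  apply: le_trans _ s1; apply: ler_piMr => //; exact: mulr_ge0.
have s3 : nc ka * nc y ^+ (n * M') * nc y ^+ d * de ^+ d <= nc ka * de.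
  apply: ler_pM => //; apply: mulr_ge0 => //; exact: mulr_ge0.
have s4 : nc ka * nc y ^+ (n * M') * nc y ^+ d * de ^+ d * nc (\det (F z)) <= nc ka * de * DF.
  apply: ler_pM => //; do 3 apply: mulr_ge0 => //.
have s5 : 1 <= nc ka * de * DF * KB.
  rewrite -nX; apply: ler_pM => //; do 4 apply: mulr_ge0 => //.
have : nc ka * de * DF * KB = de * P by rewrite /P; ring.
move=> e; rewrite e in s5.
have hPP : P <= `|P| by apply: ler_norm.
have hPa : 0 <= `|P| by [].
have : de * (2 * (`|P| + 1)) <= 1.
  by rewrite -ler_pdivlMr // mul1r.
nra.
Qed.

Lemma reach k : (exists sl F V r, StageP sl F V r /\ V \in unitmx) \/
  (exists sl F V r, size sl = k /\ StageP sl F V r).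
Proof.
elim: k => [|k [IH|[sl [F [V [r [hs hS]]]]]]]; first by right; exists [::], (fun z => u z ^+ M *: M1 z), V0, 1; split => //; exact: stage0.
- by left.
case hV : (V \in unitmx); first by left; exists sl, F, V, r.
have [sl' [F' [V' [r' [hs' hS']]]]] := stage_step hS (negbT hV).
by right; exists sl', F', V', r'; rewrite hs' hs.
Qed.

Lemma final_stage : exists sl F V r, StageP sl F V r /\ V \in unitmx.
Proof.
case: (reach (n * M + n * M').+1) => // [[sl [F [V [r [hs hS]]]]]].
by have := stage_bound hS; rewrite hs ltnn.
Qed.

End Main.

From mathcomp Require Import fingroup perm.

Section Final.
Variable R : realType.
Local Notation C := R[i].
Local Notation nc := (@nc R).
Local Notation u := (@u R).
Variable n : nat.
Local Notation Gs := (@Gs R n).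
Local Notation Ginvs := (@Ginvs R n).

Variables (M1 B : C -> 'M[C]_n).
Hypothesis hM : forall i j, laurent_at 1 (fun z => M1 z i j).
Hypothesis hB : forall i j, laurent_at 1 (fun z => B z i j).
Hypothesis hMB : germ_eq 1 (fun z => M1 z *m B z) (fun _ => 1%:M).

Lemma final_main : exists (R1 : C -> 'M[C]_n) (k : nat) (s : seq ('I_n * 'rV[C]_n)),
    all (fun p => p.2 != 0) s /\
    GL_laurent 1 R1 /\ regular_at 1 R1 /\
    GL_rat (Cmat k s) /\ regular_at 0 (Cmat k s) /\ regular_at_infty (Cmat k s) /\
    germ_eq 1 M1 (fun z => Cmat k s z *m R1 z).
Proof.
have [M [V0 HV0]] := init_ex hM.
have [M' [rhoB [KB [hrhoB HBb]]]] := B_bound hB.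
have [sl [F [V [r [[hg HF hr HE] hV]]]]] := final_stage hMB HV0 hrhoB HBb.
have [r0 [hr0 HMB]] := germ_to hMB.
exists F, M, sl; split.
  by apply/allP => p hp; case: (hg p hp).
split.
  split; first exact: Hasm_laurent HF.
  exists (fun z => (u z) ^- M *: (B z *m Gs sl (u z))); split.
    exact: Laum_scale_uinvn (Laum_Gs sl hB).
  apply: germ_of; exists (Num.min (Num.min r r0) 1); split.
    by rewrite !lt_min hr hr0 ltr01.
  move=> z /andP[z0]; rewrite !lt_min => /andP[/andP[z1 z2] z3].
  have ha : u z != 0 by apply: u_neq0; rewrite z0 z3.
  have E := HE z ltac:(by rewrite z0 z1).
  have E2 := HMB z ltac:(by rewrite z0 z2).
  have hFz : F z = Ginvs sl (u z) *m (u z ^+ M *: M1 z).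
    by rewrite -E mulmxA Ginvs_inv // mul1mx.
  rewrite hFz -!scalemxAr -!scalemxAl !scalerA mulVf ?expf_neq0 // scale1r.
  by rewrite !mulmxA -(mulmxA (Ginvs sl (u z))) E2 mulmx1 Ginvs_inv.
split; first exact: regular_of_Hasm HF hV.
split.
  split.
    have H1 : is_ratfun (fun z => (u z) ^- M).
      by apply: (rat_ext _ (rat_expn M (@rat_uinv R))) => z; rewrite exprVn.
    move=> i j; exact: (ratm_scale H1 (ratm_Gs sl (@rat_u R)) i j).
  exists (fun z => u z ^+ M *: Ginvs sl (u z)); split.
    move=> i j; exact: (ratm_scale (rat_expn M (@rat_u R)) (ratm_Ginvs sl (@rat_uinv R)) i j).
  exists [:: 1; -1] => z; rewrite !inE negb_or => /andP[h1 h2].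
  exact: Cmat_inv (u_neq0' h1 h2) hg.
have hu0 : u 0 != 0 by apply: u_neq0'; rewrite eq_sym ?oppr_eq0 oner_neq0.
split.
  apply: (regular_of_Hasm (V := Cmat M sl 0)).
    exact: Hasm_scale (opcl_inv_expn M (@opcl_uinv0 R)) (Hasm_Gs sl (@opcl_u0 R)).
  by case: (mulmx1_unit (Cmat_inv M hu0 hg)).
split.
  rewrite /regular_at_infty.
  apply: (@regular_ext _ _ _ (fun z => vfun z ^- M *: Gs sl (vfun z))).
    by move=> z hz; rewrite /Cmat u_inv.
  apply: (regular_of_Hasm (V := vfun 0 ^- M *: Gs sl (vfun 0))).
    exact: Hasm_scale (opcl_inv_expn M (@opcl_vinv0 R)) (Hasm_Gs sl (@opcl_v0 R)).
  have hv0 : vfun 0 != 0 :> C by rewrite /vfun subr0 addr0 divr1 oner_neq0.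
  by case: (mulmx1_unit (Cmat_inv M hv0 hg)).
apply: germ_of; exists (Num.min r 1); split; first by rewrite lt_min hr ltr01.
move=> z /andP[z0]; rewrite lt_min => /andP[z1 z3].
have ha : u z != 0 by apply: u_neq0; rewrite z0 z3.
have E := HE z ltac:(by rewrite z0 z1).
rewrite /Cmat -scalemxAl.
change (M1 z = u z ^- M *: (Gs sl (u z) *m F z)).
by rewrite E scalerA mulVf ?expf_neq0 // scale1r.
Qed.

End Final.

Theorem mainTheorem13 (R : realType) (n : nat) (M1 : R[i] -> 'M[R[i]]_n) :
  GL_laurent 1 M1 ->
  exists (R1 : R[i] -> 'M[R[i]]_n) (k : nat) (s : seq ('I_n * 'rV[R[i]]_n)),
    all (fun p => p.2 != 0) s /\
    GL_laurent 1 R1 /\ regular_at 1 R1 /\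
    GL_rat (Cmat k s) /\ regular_at 0 (Cmat k s) /\ regular_at_infty (Cmat k s) /\
    germ_eq 1 M1 (fun z => Cmat k s z *m R1 z).
Proof.
move=> [hM [B [hB hMB]]]; exact: final_main hM hB hMB.
Qed.
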